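(* For every $a\in\mathbb{S}$ and every finite tuple $u_1,\dots,u_i\in\mathbb{S}\setminus a^\perp$, there are infinitely many $b\in a^\perp$ such that for all $1\le j\le i$: $a\to u_j$ iff $b\to u_j$. Consequently, for any finite set $F\subseteq\mathbb{S}$ and any column $C$ of $\mathbb{S}$ disjoint from $F$, the subgroup of $\mathrm{Aut}(\mathbb{S})$ consisting of automorphisms fixing $F$ pointwise and $C$ setwise has no finite orbits on $C$.
   Context: Directed graphs are simple and loopless ($x\to y$ denotes a directed edge, at most one direction between two distinct vertices). $\mathcal{S}$ is the class of finite such graphs in which $x\perp y:\Leftrightarrow\neg(x\to y\vee y\to x)$ is an equivalence relation (its classes are called columns; $a^\perp$ denotes the column of $a$) and satisfying the parity condition: for $x_1\neq x_2$, $y_1\neq y_2$ with $x_1\perp x_2$, $y_1\perp y_2$, the number of directed edges from $\{x_1,x_2\}$ to $\{y_1,y_2\}$ is even. $\mathbb{S}$ (the semigeneric directed graph) is the Fraïssé limit of $\mathcal{S}$, i.e. the countable homogeneous directed graph whose finite induced substructures are exactly the members of $\mathcal{S}$ up to isomorphism. *)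

(* Defs.v *)
From mathcomp Require Import all_boot.
From Stdlib Require List.
Set Implicit Arguments. Unset Strict Implicit. Unset Printing Implicit Defensive.

Definition perp (T : Type) (e : rel T) (x y : T) : bool := ~~ e x y && ~~ e y x.

Definition in_classS (T : finType) (e : rel T) : Prop :=
  (forall x, ~~ e x x) /\
  (forall x y, ~~ (e x y && e y x)) /\
  (* ⊥ is an equivalence relation (reflexivity and symmetry are automatic) *)
  (forall x, perp e x x) /\
  (forall x y, perp e x y -> perp e y x) /\
  (forall x y z, perp e x y -> perp e y z -> perp e x z) /\
  (forall x1 x2 y1 y2, x1 != x2 -> y1 != y2 -> perp e x1 x2 -> perp e y1 y2 ->
     ~~ odd (e x1 y1 + e x1 y2 + e x2 y1 + e x2 y2)).

Definition automorphism (V : Type) (E : rel V) (s : V -> V) : Prop :=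
  bijective s /\ forall x y, E (s x) (s y) = E x y.

(* (V, E) is (isomorphic to) the semigeneric directed graph 𝕊:
   a countable homogeneous directed graph whose age is exactly 𝒮
   (this characterizes the Fraïssé limit up to isomorphism). *)
Definition is_semigeneric (V : Type) (E : rel V) : Prop :=
  (exists c : V -> nat, injective c) /\
  (forall (T : finType) (f : T -> V), injective f ->
     in_classS (fun x y => E (f x) (f y))) /\
  (forall (T : finType) (e : rel T), in_classS e ->
     exists f : T -> V, injective f /\ forall x y, E (f x) (f y) = e x y) /\
  (forall (T : finType) (f g : T -> V), injective f -> injective g ->
     (forall x y, E (f x) (f y) = E (g x) (g y)) ->
     exists s, automorphism E s /\ forall x, s (f x) = g x).

Definition finite_pred (V : Type) (P : V -> Prop) : Prop :=
  exists l : list V, forall x, P x -> List.In x l.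

Definition infinite_pred (V : Type) (P : V -> Prop) : Prop := ~ finite_pred P.

(* Main.v *)
Require Import Defs.
From mathcomp Require Import all_boot.
From Stdlib Require List FunctionalExtensionality.
Set Implicit Arguments. Unset Strict Implicit. Unset Printing Implicit Defensive.

Lemma inIn (T : eqType) (x : T) (l : seq T) : List.In x l <-> x \in l.
Proof.
elim: l => [|y l IH] /=; first by split.
rewrite in_cons; split.
  by case=> [->|/IH ->]; rewrite ?eqxx ?orbT.
by case/orP=> [/eqP ->|/IH]; [left|right].
Qed.

Section S.
Variable V : eqType.
Variable E : rel V.
Hypothesis H2 : forall (T : finType) (f : T -> V), injective f ->
     in_classS (fun x y => E (f x) (f y)).
Hypothesis H3 : forall (T : finType) (e : rel T), in_classS e ->
     exists f : T -> V, injective f /\ forall x y, E (f x) (f y) = e x y.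
Hypothesis H4 : forall (T : finType) (f g : T -> V), injective f -> injective g ->
     (forall x y, E (f x) (f y) = E (g x) (g y)) ->
     exists s, automorphism E s /\ forall x, s (f x) = g x.

Lemma pull (T T' : finType) (e : rel T') (phi : T -> T') :
  in_classS e -> in_classS (fun x y => e (phi x) (phi y)).
Proof.
case=> [h1 [h2 [h3 [h4 [h5 h6]]]]].
split; first by move=> x; apply: h1.
split; first by move=> x y; apply: h2.
split; first by move=> x; apply: h3.
split; first by move=> x y; apply: h4.
split; first by move=> x y z; apply: h5.
move=> x1 x2 y1 y2 nx ny px py.
have l := h1 (phi x1).
case: (eqVneq (phi x1) (phi x2)) => ex.
  rewrite -ex; case: (e (phi x1) (phi y1)); case: (e (phi x1) (phi y2)) => //.
case: (eqVneq (phi y1) (phi y2)) => ey.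
  rewrite -ey; case: (e (phi x1) (phi y1)); case: (e (phi x2) (phi y1)) => //.
exact: h6.
Qed.

Lemma classS_any (T : finType) (psi : T -> V) (d : V) :
  in_classS (fun x y => E (psi x) (psi y)).
Proof.
set s := undup (map psi (enum T)).
have hs : uniq s by apply: undup_uniq.
have mem x : psi x \in s by rewrite mem_undup; apply: map_f; rewrite mem_enum.
pose phi (x : T) : 'I_(size s) := Ordinal (etrans (index_mem _ _) (mem x)).
pose h (i : 'I_(size s)) := nth d s i.
have hinj : injective h.
  move=> i j /eqP; rewrite /h nth_uniq // => /eqP; exact: val_inj.
have := pull phi (H2 hinj).
have eq x : h (phi x) = psi x by rewrite /h /= nth_index.
by rewrite /= (_ : (fun x y => E (h (phi x)) (h (phi y))) = (fun x y => E (psi x) (psi y))) //;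
  apply: FunctionalExtensionality.functional_extensionality => x; apply: FunctionalExtensionality.functional_extensionality => y; rewrite !eq.
Qed.

Lemma loopless x : E x x = false.
Proof.
have [h _] := classS_any (fun _ : unit => x) x.
by apply/negbTE; apply: (h tt).
Qed.

Lemma perp_trans x y z : perp E x y -> perp E y z -> perp E x z.
Proof.
pose psi (o : option bool) := match o with None => x | Some true => y | Some false => z end.
have [_ [_ [_ [_ [h _]]]]] := classS_any psi x.
exact: (h None (Some true) (Some false)).
Qed.

Lemma perp_sym x y : perp E x y -> perp E y x.
Proof. by rewrite /perp andbC. Qed.

Lemma perp_eq x y z : perp E x y -> perp E x z = perp E y z.
Proof.
move=> h; apply/idP/idP => h'.
  exact: perp_trans (perp_sym h) h'.
exact: perp_trans h h'.
Qed.

Lemma twin (s : seq V) (c : V) : uniq s -> c \in s ->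
  exists b, b \notin s /\ perp E c b /\
     forall x, x \in s -> E x b = E x c /\ E b x = E c x.
Proof.
move=> us cs.
pose psi (o : option 'I_(size s)) := match o with None => c | Some i => nth c s i end.
have [g [ginj gE]] := H3 (classS_any psi c).
pose h (i : 'I_(size s)) := nth c s i.
have hinj : injective h.
  move=> i j /eqP; rewrite /h nth_uniq // => /eqP; exact: val_inj.
have [sg [[[sg' sgK _] sgE] sgh]] := H4 (f := fun i => g (Some i)) (g := h)
  (fun i j e => Some_inj (ginj _ _ e)) hinj (fun i j => gE _ _).
have sginj : injective sg := can_inj sgK.
exists (sg (g None)).
have key x : x \in s -> E x (sg (g None)) = E x c /\ E (sg (g None)) x = E c x.
  move=> xs.
  have xi : index x s < size s by rewrite index_mem.
  have ex : sg (g (Some (Ordinal xi))) = x by rewrite sgh /h /= nth_index.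
  by rewrite -{1}ex -{3}ex !sgE !gE /= nth_index.
split.
  apply/negP => bs.
  have bi : index (sg (g None)) s < size s by rewrite index_mem.
  have := sgh (Ordinal bi); rewrite /h /= nth_index //.
  by move=> /sginj /ginj.
split; last exact: key.
have [k1 k2] := key c cs.
by rewrite /perp k1 k2 loopless.
Qed.

End S.

Theorem mainTheorem7 (V : Type) (E : rel V) (HS : is_semigeneric E) :
  (forall (a : V) (n : nat) (u : 'I_n -> V),
     (forall j, ~~ perp E a (u j)) ->
     infinite_pred (fun b => perp E a b /\ forall j, E a (u j) = E b (u j)))
  /\
  (forall (F : list V) (a : V),
     (forall x, List.In x F -> ~~ perp E a x) ->
     forall c, perp E a c ->
       infinite_pred (fun y => exists s, automorphism E s /\
                        (forall x, List.In x F -> s x = x) /\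
                        (forall x, perp E a (s x) = perp E a x) /\
                        s c = y)).
Proof.
case: HS => [[cnt cinj] [H2 [H3 H4]]].
pose W : eqType := inj_type cinj.
pose EW : rel W := E.
have H2' := H2; have H3' := H3; have H4' := H4.
split.
  move=> a n u _ [l Hl].
  pose s : seq W := undup ((a : W) :: [seq (u i : W) | i <- enum 'I_n] ++ (l : seq W)).
  have [b [bn [pb hb]]] := @twin W EW H2' H3' H4' s a (undup_uniq _)
     ltac:(by rewrite mem_undup mem_head).
  have : List.In b l.
    apply: Hl; split => // j.
    have [_ h] := hb (u j) ltac:(by rewrite mem_undup in_cons mem_cat map_f ?mem_enum ?orbT).
    by symmetry; exact: h.
  move/(@inIn W) => bl.
  by move: bn; rewrite mem_undup in_cons mem_cat bl !orbT.
move=> F a hF c pac [l Hl].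
pose s : seq W := undup ((c : W) :: (F : seq W) ++ (l : seq W)).
have [b [bn [pb hb]]] := @twin W EW H2' H3' H4' s c (undup_uniq _)
   ltac:(by rewrite mem_undup mem_head).
pose F' : seq W := undup (F : seq W).
have uF : uniq F' := undup_uniq _.
have cF : (c : W) \notin F'.
  apply/negP; rewrite /F' mem_undup => /(@inIn W) /hF.
  by rewrite pac.
have bF : b \notin F'.
  by apply: contra bn; rewrite /F' /s !mem_undup in_cons mem_cat => ->; rewrite orbT.
pose f (o : option 'I_(size F')) : W := match o with None => c | Some i => nth c F' i end.
pose g (o : option 'I_(size F')) : W := match o with None => b | Some i => nth c F' i end.
have hinj : injective (fun i : 'I_(size F') => (nth (c : W) F' i : W)).
  move=> i j /eqP; rewrite nth_uniq // => /eqP; exact: val_inj.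
have finj : injective f.
  case=> [i|] [j|] //= e; first by rewrite (hinj _ _ e).
    by move: cF; rewrite -e mem_nth.
  by move: cF; rewrite e mem_nth.
have ginj : injective g.
  case=> [i|] [j|] //= e; first by rewrite (hinj _ _ e).
    by move: bF; rewrite -e mem_nth.
  by move: bF; rewrite e mem_nth.
have inS i : (nth (c:W) F' i : W) \in s.
  rewrite /s mem_undup in_cons; case: (ltnP i (size F')) => hi.
    by have := mem_nth (c:W) hi; rewrite /F' mem_undup mem_cat => ->; rewrite orbT.
  by rewrite nth_default // eqxx.
have fg x y : E (f x) (f y) = E (g x) (g y).
  case: x => [i|]; case: y => [j|] //=.
  - by have [h _] := hb _ (inS i); symmetry; exact: h.
  - by have [_ h] := hb _ (inS j); symmetry; exact: h.
  - exact: (etrans (@loopless W EW H2' c) (esym (@loopless W EW H2' b))).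
have [sg [sgA sgh]] := H4 _ f g finj ginj fg.
have [[sg' sgK _] sgE] := sgA.
have : List.In b l.
  apply: Hl; exists sg; split; first exact: sgA.
  split.
    move=> x /(@inIn W x) xF.
    have xi : index (x : W) F' < size F' by rewrite index_mem mem_undup.
    have ex : (nth (c:W) F' (index (x:W) F') : W) = x by rewrite nth_index // /F' mem_undup.
    have := sgh (Some (Ordinal xi)); rewrite /f /g /=.
    have ex' : nth c F' (index (x:W) F') = x := ex.
    by rewrite ex'.
  split; last exact: (sgh None).
  move=> x.
  have sc : sg c = b := sgh None.
  have e1 : perp E a x = perp E c x := @perp_eq W EW H2' a c x pac.
  have e2 : perp E a (sg x) = perp E c (sg x) := @perp_eq W EW H2' a c (sg x) pac.
  have e3 : perp E c (sg x) = perp E b (sg x) := @perp_eq W EW H2' c b (sg x) pb.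
  rewrite e2 e1 e3 -sc /perp !sgE.
  by rewrite andbC.
move/(@inIn W) => bl.
by move: bn; rewrite mem_undup in_cons mem_cat bl !orbT.
Qed.
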